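(* Let $C \ge 2$, $d \ge 1$, $I \ge 1$ and $J$ be integers with $1 \le J \le C$. Let $\{\xi_i\}_{i=1}^m$ be a sequence of random variables and $\{\mathbf{y}_i\}_{i=1}^m$ a sequence of random vectors in $\mathbb{R}^d$, each $\mathbf{y}_i$ depending on $\xi_1,\dots,\xi_i$, such that $\mathbb{E}_{\xi_i}[\mathbf{y}_i \mid \xi_1,\dots,\xi_{i-1}] = \mathbf{e}_i$ (so $\{\mathbf{y}_i-\mathbf{e}_i\}$ is a martingale difference sequence with respect to the filtration generated by $\{\xi_i\}$) and $\mathbb{E}_{\xi_i}[\|\mathbf{y}_i-\mathbf{e}_i\|^2 \mid \xi_1,\dots,\xi_{i-1}] \le \delta^2$ for all $i$, for a fixed constant $\delta>0$. Let $\mathbf{x}_1,\dots,\mathbf{x}_C \in \mathbb{R}^d$ be fixed vectors with population mean $\overline{\mathbf{x}} = \frac{1}{C}\sum_{k=1}^C \mathbf{x}_k$ and population variance $\nu^2 = \frac{1}{C}\sum_{k=1}^C \|\mathbf{x}_k-\overline{\mathbf{x}}\|^2$, and let $\psi=(\psi_1,\dots,\psi_C)$ be a uniformly random permutation of $\{1,\dots,C\}$ (i.e. $\mathbf{x}_{\psi_1},\mathbf{x}_{\psi_2},\dots$ are drawn from the population by sampling without replacement). For $1\le c\le J$, $0 \le i \le I-1$ and $1\le k\le c$ define $$p_{c,i}(k) = \begin{cases} I-1, & k \le c-1,\\ i-1, & k = c.\end{cases}$$ Then $$\sum_{c=1}^J \sum_{i=0}^{I-1} \mathbb{E}\left\|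 \sum_{k=1}^{c} \sum_{j=0}^{p_{c,i}(k)} (\mathbf{x}_{\psi_k} - \overline{\mathbf{x}})\right\|^2 \le \frac{1}{2} J^2 I^3 \nu^2 .$$
   Context: $\|\cdot\|$ is the Euclidean norm. An inner sum $\sum_{j=0}^{p}$ with $p=-1$ (which occurs for $k=c$, $i=0$) is empty and equals $0$. The expectation is over the random permutation $\psi$. The martingale vectors were denoted $\mathbf{x}_i$ in the paper; they are renamed $\mathbf{y}_i$ here only to avoid a clash with the population vectors. *)

(* Defs.v *)
From HB Require Import structures.
From mathcomp Require Import all_boot all_order all_algebra all_fingroup.
From mathcomp Require Import reals.
Set Implicit Arguments. Unset Strict Implicit. Unset Printing Implicit Defensive.
Import Order.TTheory GRing.Theory Num.Theory.
Local Open Scope ring_scope.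

Definition sqnorm (R : realType) (d : nat) (v : 'rV[R]_d) : R :=
  \sum_(l < d) (v 0 l) ^+ 2.

Definition xbar (R : realType) (C d : nat) (x : 'I_C -> 'rV[R]_d) : 'rV[R]_d :=
  (C%:R)^-1 *: \sum_(k < C) x k.

Definition nu2 (R : realType) (C d : nat) (x : 'I_C -> 'rV[R]_d) : R :=
  (C%:R)^-1 * \sum_(k < C) sqnorm (x k - xbar x).

Definition Eperm (R : realType) (C : nat) (f : {perm 'I_C} -> R) : R :=
  (C`!%:R)^-1 * \sum_(s : {perm 'I_C}) f s.

(* p_{c,i}(k) for 1 <= k <= c (k 1-indexed), an integer (may be -1) *)
Definition pci (I c i k : nat) : int :=
  if (k <= c.-1)%N then (I%:Z - 1) else (i%:Z - 1).

(* number of terms of the inner sum \sum_{j=0}^{p}: p+1 (0 when p = -1) *)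
Definition nterms (p : int) : nat := absz (p + 1).

(* Main.v *)
Require Import Defs.
From HB Require Import structures.
From mathcomp Require Import all_boot all_order all_algebra all_fingroup.
From mathcomp Require Import reals ring lra zify.
Import Order.TTheory GRing.Theory Num.Theory.
Set Implicit Arguments. Unset Strict Implicit.
Local Open Scope ring_scope.

Definition G (R : realType) (C d : nat) (y : 'I_C -> 'rV[R]_d) (p q : 'I_C) : R :=
  \sum_(l < d) y p 0 l * y q 0 l.

Lemma Eperm_reindex (R : realType) (C : nat) (t : {perm 'I_C}) (f : {perm 'I_C} -> R) :
  Eperm f = Eperm (fun s => f (t * s)%g).
Proof. rewrite /Eperm; congr (_ * _); exact: (reindex_inj (mulgI t)). Qed.

Lemma Eperm_const (R : realType) (C : nat) (c : R) : Eperm (fun _ : {perm 'I_C} => c) = c.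
Proof.
rewrite /Eperm sumr_const card_Sn -[c *+ _]mulr_natr mulrCA mulVf ?mulr1 //.
by rewrite pnatr_eq0 -lt0n fact_gt0.
Qed.

Lemma Eperm_sum (R : realType) (C : nat) (I : finType) (F : I -> {perm 'I_C} -> R) :
  Eperm (fun s => \sum_i F i s) = \sum_i Eperm (F i).
Proof. by rewrite /Eperm exchange_big mulr_sumr. Qed.

Lemma EpermZ (R : realType) (C : nat) (a : R) (f : {perm 'I_C} -> R) :
  Eperm (fun s => a * f s) = a * Eperm f.
Proof. by rewrite /Eperm -mulr_sumr mulrCA. Qed.

Lemma EpermB (R : realType) (C : nat) (f g : {perm 'I_C} -> R) :
  Eperm (fun s => f s - g s) = Eperm f - Eperm g.
Proof. by rewrite /Eperm sumrB mulrBr. Qed.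

Lemma Eperm_ge0 (R : realType) (C : nat) (f : {perm 'I_C} -> R) :
  (forall s, 0 <= f s) -> 0 <= Eperm f.
Proof. move=> h; rewrite /Eperm mulr_ge0 ?invr_ge0 ?ler0n //; exact: sumr_ge0. Qed.

Lemma G_ge0 (R : realType) (C d : nat) (y : 'I_C -> 'rV[R]_d) p : 0 <= G y p p.
Proof. by apply: sumr_ge0 => l _; rewrite -expr2 sqr_ge0. Qed.

Lemma sqnorm_sum (R : realType) (C d : nat) (y : 'I_C -> 'rV[R]_d) (w : 'I_C -> R) (s : {perm 'I_C}) :
  sqnorm (\sum_k w k *: y (s k)) = \sum_a \sum_b w a * w b * G y (s a) (s b).
Proof.
rewrite /sqnorm /G.
under eq_bigr => l _ do rewrite summxE expr2 big_distrlr /=.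
rewrite exchange_big; apply: eq_bigr => a _.
rewrite exchange_big; apply: eq_bigr => b _.
rewrite mulr_sumr; apply: eq_bigr => l _; rewrite !mxE; ring.
Qed.

Lemma Eperm_ext (R : realType) (C : nat) (f g : {perm 'I_C} -> R) :
  (forall s, f s = g s) -> Eperm f = Eperm g.
Proof. by move=> h; rewrite /Eperm; congr (_ * _); apply: eq_bigr => s _. Qed.

Lemma sum_perm (R : realType) (C : nat) (s : {perm 'I_C}) (F : 'I_C -> R) :
  \sum_b F (s b) = \sum_b F b.
Proof.
rewrite (reindex_inj (@perm_inj _ s^-1)); apply: eq_bigr => b _.
by rewrite permKV.
Qed.

Lemma E_diag (R : realType) (C d : nat) (y : 'I_C -> 'rV[R]_d) (hC : (0 < C)%N) a :
  Eperm (fun s => G y (s a) (s a)) = C%:R^-1 * \sum_p G y p p.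
Proof.
have eqa : forall a', Eperm (fun s => G y (s a) (s a)) = Eperm (fun s => G y (s a') (s a')).
  move=> a'; rewrite (Eperm_reindex (tperm a a')); apply: Eperm_ext => s.
  by rewrite permM tpermL.
have hs : \sum_(a' < C) Eperm (fun s => G y (s a') (s a')) = \sum_p G y p p.
  rewrite -Eperm_sum -[RHS](Eperm_const C); apply: Eperm_ext => s.
  exact: (sum_perm s (fun p => G y p p)).
have e2 : \sum_(a' < C) Eperm (fun s => G y (s a') (s a')) = \sum_(a' < C) Eperm (fun s => G y (s a) (s a)).
  by apply: eq_bigr => a' _; rewrite -eqa.
rewrite e2 sumr_const card_ord in hs; rewrite -hs.
set E := Eperm _; rewrite -(mulr_natr E C) mulrCA mulVf ?mulr1 //.
by rewrite pnatr_eq0 -lt0n.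
Qed.

Lemma G_sum0 (R : realType) (C d : nat) (y : 'I_C -> 'rV[R]_d) (hy : \sum_p y p = 0) p
  (s : {perm 'I_C}) : \sum_b G y p (s b) = 0.
Proof.
rewrite /G exchange_big /=; apply: big1 => l _.
rewrite -mulr_sumr (sum_perm s (fun q => y q 0 l)).
by rewrite -summxE hy mxE mulr0.
Qed.

Lemma E_off (R : realType) (C d : nat) (y : 'I_C -> 'rV[R]_d) (hy : \sum_p y p = 0)
  (hC : (1 < C)%N) a b : a != b -> Eperm (fun s => G y (s a) (s b)) <= 0.
Proof.
move=> hab.
have eqb : forall b', b' != a -> Eperm (fun s => G y (s a) (s b)) = Eperm (fun s => G y (s a) (s b')).
  move=> b' hb'; rewrite (Eperm_reindex (tperm b b')); apply: Eperm_ext => s.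
  by rewrite !permM tpermL tpermD // eq_sym.
have h0 : \sum_b' Eperm (fun s => G y (s a) (s b')) = 0.
  by rewrite -Eperm_sum -[RHS](Eperm_const C 0); apply: Eperm_ext => s; rewrite G_sum0.
rewrite (bigD1 a) //= in h0.
have : \sum_(b' | b' != a) Eperm (fun s => G y (s a) (s b')) =
       Eperm (fun s => G y (s a) (s b)) *+ C.-1.
  transitivity (\sum_(b' | b' != a) Eperm (fun s => G y (s a) (s b))).
    by apply: eq_bigr => b' hb'; rewrite -eqb.
  by rewrite sumr_const cardC1 card_ord.
move=> h1; rewrite h1 in h0.
have hd : 0 <= Eperm (fun s => G y (s a) (s a)) by apply: Eperm_ge0 => s; exact: G_ge0.
have hpos : (0 : R) < C.-1%:R by rewrite ltr0n -ltnS prednK // ltnW.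
rewrite -mulr_natr in h0.
rewrite -(pmulr_rle0 _ hpos) mulrC.
lra.
Qed.

Lemma keyL (R : realType) (C d : nat) (y : 'I_C -> 'rV[R]_d) (hy : \sum_p y p = 0)
  (hC : (1 < C)%N) (w : 'I_C -> R) (hw : forall k, 0 <= w k) :
  Eperm (fun s => sqnorm (\sum_k w k *: y (s k))) <=
  (\sum_k w k ^+ 2) * (C%:R^-1 * \sum_p G y p p).
Proof.
rewrite (Eperm_ext (fun s => sqnorm_sum y w s)) Eperm_sum mulr_suml.
apply: ler_sum => a _.
rewrite Eperm_sum (bigD1 a) //= EpermZ E_diag ?(ltnW hC) // expr2.
rewrite -[X in _ <= X]addr0 lerD2l.
apply: sumr_le0 => b hb; rewrite EpermZ; apply: mulr_ge0_le0.
  by rewrite mulr_ge0.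
by apply: E_off => //; rewrite eq_sym.
Qed.

Lemma sumsq_nat (I : nat) : (2 * \sum_(0 <= i < I) i ^ 2 <= I ^ 3)%N.
Proof.
elim: I => [|I IH]; first by rewrite big_geq.
rewrite big_nat_recr //=; nia.
Qed.

Lemma total_nat (I J : nat) :
  (2 * \sum_(1 <= c < J.+1) \sum_(0 <= i < I) ((c.-1) * I ^ 2 + i ^ 2) <= J ^ 2 * I ^ 3)%N.
Proof.
have hS := sumsq_nat I.
elim: J => [|J IH]; first by rewrite big_geq.
rewrite big_nat_recr //= big_split /= sum_nat_const_nat /=.
move: IH; set T := \sum_(1 <= c < J.+1) _; nia.
Qed.

Lemma wsum (I c i C : nat) (h1 : (1 <= c)%N) (h2 : (c <= C)%N) (hi : (i < I)%N) :
  (\sum_(k < C) (if (k < c)%N then nterms (pci I c i k.+1) else 0%N) ^ 2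
   = c.-1 * I ^ 2 + i ^ 2)%N.
Proof.
rewrite -(big_mkord xpredT (fun k => ((if (k < c)%N then nterms (pci I c i k.+1) else 0%N) ^ 2)%N)).
rewrite (big_cat_nat (n:=c)) //=.
rewrite [X in (_ + X)%N]big1_seq ?addn0; last first.
  move=> k /andP [_]; rewrite mem_index_iota => /andP [hk _]; by rewrite ltnNge hk.
case: c h1 h2 => [//|c] _ _ /=.
rewrite big_nat_recr //= ltnSn /nterms /pci succnK ltnn subrK /=.
rewrite (eq_big_nat _ _ (F2 := fun _ => (I ^ 2)%N)); last first.
  move=> k /andP [_ hk].
  by rewrite (ltn_trans hk (ltnSn c)) hk subrK.
by rewrite sum_nat_const_nat subn0.
Qed.

Theorem lemma4 (R : realType) (C d I J : nat)
  (hC : (2 <= C)%N) (hd : (1 <= d)%N) (hI : (1 <= I)%N)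
  (hJ1 : (1 <= J)%N) (hJC : (J <= C)%N)
  (x : 'I_C -> 'rV[R]_d) :
  \sum_(1 <= c < J.+1) \sum_(0 <= i < I)
     Eperm (fun s : {perm 'I_C} =>
       sqnorm (\sum_(k < C | (k < c)%N)
                 \sum_(j < nterms (pci I c i k.+1)) (x (s k) - xbar x)))
  <= 2^-1 * (J%:R ^+ 2) * (I%:R ^+ 3) * nu2 x.
Proof.
set y := fun p => x p - xbar x.
have hC0 : (0 < C)%N by apply: leq_trans hC.
have hy : \sum_p y p = 0.
  rewrite /y sumrB sumr_const card_ord /xbar -scaler_nat scalerA mulfV ?scale1r ?subrr //.
  by rewrite pnatr_eq0 -lt0n.
have hnu : nu2 x = C%:R^-1 * \sum_p G y p p.
  by rewrite /nu2; congr (_ * _).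
have hnu0 : 0 <= nu2 x.
  by rewrite hnu mulr_ge0 ?invr_ge0 ?ler0n //; apply: sumr_ge0 => p _; exact: G_ge0.
pose f c i (k : 'I_C) := (if (k < c)%N then nterms (pci I c i k.+1) else 0%N).
have step : forall c i, (1 <= c < J.+1)%N -> (0 <= i < I)%N ->
   Eperm (fun s : {perm 'I_C} =>
       sqnorm (\sum_(k < C | (k < c)%N)
                 \sum_(j < nterms (pci I c i k.+1)) (x (s k) - xbar x)))
   <= ((c.-1 * I ^ 2 + i ^ 2)%N)%:R * nu2 x.
  move=> c i /andP [hc1 hcJ] /andP [_ hi].
  have hcC : (c <= C)%N by apply: leq_trans hJC.
  rewrite -(wsum hc1 hcC hi) hnu.
  have -> : (((\sum_(k < C) f c i k ^ 2)%N)%:R : R) = \sum_k ((f c i k)%:R) ^+ 2.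
    by rewrite natr_sum; apply: eq_bigr => k _; rewrite natrX.
  rewrite (Eperm_ext (g := fun s => sqnorm (\sum_k (f c i k)%:R *: y (s k)))).
    by apply: keyL => // k; rewrite ler0n.
  move=> s; congr sqnorm; rewrite big_mkcond /=; apply: eq_bigr => k _.
  rewrite /f; case: ifP => _; last by rewrite scale0r.
  by rewrite sumr_const card_ord scaler_nat.
apply: (le_trans (y := \sum_(1 <= c < J.+1) \sum_(0 <= i < I) ((c.-1 * I ^ 2 + i ^ 2)%N)%:R * nu2 x)).
  rewrite big_nat_cond [X in _ <= X]big_nat_cond; apply: ler_sum => c /andP [hc _].
  rewrite big_nat_cond [X in _ <= X]big_nat_cond; apply: ler_sum => i /andP [hi _].
  exact: step.
under eq_bigr => c _ do rewrite -mulr_suml.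
rewrite -mulr_suml; apply: ler_wpM2r => //.
under eq_bigr => c _ do rewrite -natr_sum.
rewrite -natr_sum.
have := total_nat I J.
rewrite -(ler_nat R) !natrM.
set N := (_ %:R : R).
move=> h; rewrite !exprS expr0 !mulr1.
set a := J%:R in h *; set b := I%:R in h *.
have -> : 2^-1 * (a * a) * (b * (b * b)) = 2^-1 * (a * a * (b * (b * b))) by ring.
lra.
Qed.
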